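(* In the setting of the context, let $(\sigma_t,\sigma'_t)_{t\ge0}$ be the monotone coupling started at $(\sigma_0,\sigma'_0)$. Then for every $t\ge0$, entrywise, \[ \Big(\mathbb E\,\mathrm{dist}(\sigma_t^{(i)},\sigma_t'^{(i)})\Big)_{i=1}^m\le \mathbf A^t\Big(\mathrm{dist}(\sigma_0^{(i)},\sigma_0'^{(i)})\Big)_{i=1}^m, \] where $\mathbf A=(\mathbf A_{ij})$ is the $m\times m$ matrix with $\mathbf A_{ii}=1-\frac1n+\beta K_{ii}(p_i-\frac1n)$ and $\mathbf A_{ij}=\beta p_iK_{ij}$ for $i\ne j$, with $K_{ij}=k_{ij}/n$.
   Context: Fix $m\ge1$, proportions $p_1,\dots,p_m>0$ with $\sum_ip_i=1$, a symmetric matrix $\mathbf K=(k_{ij})$ with all $k_{ij}>0$, and $\beta\ge0$; $n$ is a positive integer with $np_i\in\mathbb N$. The vertex set $V=\{1,\dots,n\}$ is partitioned into blocks $G_1,\dots,G_m$ with $|G_i|=np_i$; for $v\in G_i,w\in G_j$ put $K(v,w)=K_{ij}=k_{ij}/n$. For $\sigma\in\Omega=\{-1,+1\}^V$ and $v\in V$ let $S^v(\sigma)=\sum_{w\ne v}K(v,w)\sigma(w)$ and $r_+(s)=\frac{1+\tanh(\beta s)}2$. The monotone coupling is the grand coupling of Glauber dynamics in which, at each step, a vertex $I$ uniform on $V$ and an independent $U$ uniform on $[0,1]$ are drawn (shared by all chains), and each chain in state $\sigma$ sets the spin at $I$ to $+1$ if $U\le r_+(S^I(\sigma))$ and to $-1$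 otherwise, leaving other spins unchanged. For configurations $\sigma,\sigma'$, $\mathrm{dist}(\sigma^{(i)},\sigma'^{(i)})=\frac12\sum_{v\in G_i}|\sigma(v)-\sigma'(v)|$ is the number of vertices of $G_i$ where they differ. *)

(* Defs.v *)
From HB Require Import structures.
From mathcomp Require Import all_boot all_order all_algebra.
From mathcomp Require Import all_classical all_reals all_analysis.
Set Implicit Arguments. Unset Strict Implicit. Unset Printing Implicit Defensive.
Import Order.TTheory GRing.Theory Num.Theory.
Import numFieldNormedType.Exports.
Local Open Scope classical_set_scope.
Local Open Scope ring_scope.

Section Glauber.
Variable R : realType.

Definition tanhR (x : R) : R := (expR x - expR (- x)) / (expR x + expR (- x)).

Definition rplus (beta s : R) : R := (1 + tanhR (beta * s)) / 2.

(* spin configurations on V = 'I_n : true = +1, false = -1 *)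
Definition config (n : nat) := {ffun 'I_n -> bool}.
Definition spin (b : bool) : R := if b then 1 else -1.

(* K(v,w) = k_{g v, g w} / n, where g : V -> 'I_m assigns each vertex its block *)
Definition Kvw (n m : nat) (k : 'M[R]_m) (g : 'I_n -> 'I_m) (v w : 'I_n) : R :=
  k (g v) (g w) / n%:R.

Definition Sloc (n m : nat) (k : 'M[R]_m) (g : 'I_n -> 'I_m) (s : config n) (v : 'I_n) : R :=
  \sum_(w < n | w != v) Kvw k g v w * spin (s w).

Definition upd (n m : nat) (k : 'M[R]_m) (g : 'I_n -> 'I_m) (beta : R)
  (s : config n) (v : 'I_n) (u : R) : config n :=
  [ffun w => if w == v then (u <= rplus beta (Sloc k g s v)) else s w].

(* one step of the monotone (grand) coupling: shared (v,u) *)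
Definition cstep (n m : nat) (k : 'M[R]_m) (g : 'I_n -> 'I_m) (beta : R)
  (x : config n * config n) (v : 'I_n) (u : R) : config n * config n :=
  (upd k g beta x.1 v u, upd k g beta x.2 v u).

(* E[ f(X_t) | X_0 = x ] for the coupled chain, with I uniform on V and
   U uniform on [0,1] (Lebesgue measure), independent at each step. *)
Fixpoint cexp (n m : nat) (k : 'M[R]_m) (g : 'I_n -> 'I_m) (beta : R)
  (t : nat) (f : config n * config n -> R) (x : config n * config n) : R :=
  match t with
  | 0 => f x
  | t'.+1 => n%:R^-1 * \sum_(v < n)
       (\int[@lebesgue_measure R]_(u in `[0%R, 1%R]) cexp k g beta t' f (cstep k g beta x v u))
  end.

Definition distb (n m : nat) (g : 'I_n -> 'I_m) (i : 'I_m) (x : config n * config n) : R :=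
  (#|[set v : 'I_n | (g v == i) && (x.1 v != x.2 v)]|)%:R.

Definition Amat (n m : nat) (p : 'I_m -> R) (k : 'M[R]_m) (beta : R) : 'M[R]_m :=
  \matrix_(i, j) (if i == j
                  then 1 - n%:R^-1 + beta * (k i i / n%:R) * (p i - n%:R^-1)
                  else beta * p i * (k i j / n%:R)).

End Glauber.

(* Main.v *)
Require Import Defs.
From HB Require Import structures.
From mathcomp Require Import all_boot all_order all_algebra.
From mathcomp Require Import all_classical all_reals all_analysis.
From mathcomp Require Import measurable_realfun ring lra.
Import Order.TTheory GRing.Theory Num.Theory.
Import numFieldNormedType.Exports.
Set Implicit Arguments. Unset Strict Implicit. Unset Printing Implicit Defensive.
Local Open Scope ring_scope.

Section Tanh.
Variable R : realType.

Lemma tanh_form (x : R) : tanhR x = 1 - 2 / (expR x * expR x + 1).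
Proof.
rewrite /tanhR expRN; have e0 := expR_gt0 x.
set e := expR x in e0 *.
have h1 : e != 0 by rewrite gt_eqF.
have h2 : e * e + 1 != 0 by rewrite gt_eqF // addr_gt0 // mulr_gt0.
have h3 : e + e^-1 != 0 by rewrite gt_eqF // addr_gt0 // invr_gt0.
by field; rewrite ?h1 ?h2 ?h3.
Qed.

Lemma tanh_der (x : R) : is_derive x 1 (@tanhR R) (1 - tanhR x ^+ 2).
Proof.
have e0 := expR_gt0 x.
have h2 : expR x * expR x + 1 != 0 by rewrite gt_eqF // addr_gt0 // mulr_gt0.
have D1 := is_deriveD (is_deriveM (is_derive_expR x) (is_derive_expR x)) (is_derive_cst (1:R) x 1).
have D2 := @is_deriveV _ (expR * expR + cst 1) x _ 1 h2 D1.
have D3 := is_deriveB (is_derive_cst (1:R) x 1) (is_deriveZ 2 D2).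
lazymatch type of D3 with is_derive _ _ ?F ?d =>
  have -> : @tanhR R = F; [apply/funext => y|apply: (is_derive_eq D3)] end.
  rewrite tanh_form; reflexivity.
change (0 - 2 * (- (expR x * expR x + 1) ^- 2 * (expR x * expR x + expR x * expR x + 0)) = 1 - (1 - 2 * (expR x * expR x + 1)^-1) ^+ 2).
set e := expR x in e0 h2 *.
by field; rewrite ?h2.
Qed.

Lemma tanh_bnd (x : R) : -1 <= tanhR x <= 1.
Proof.
rewrite tanh_form; have e0 := expR_gt0 x.
have h : 1 <= expR x * expR x + 1 by rewrite lerDr mulr_ge0 // ltW.
have i1 : (expR x * expR x + 1)^-1 <= 1 by rewrite invf_le1 // (lt_le_trans ltr01).
have i0 : 0 <= (expR x * expR x + 1)^-1 by rewrite invr_ge0 (le_trans ler01).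
by apply/andP; split; lra.
Qed.

Lemma tanh_lip (a b : R) : `|tanhR a - tanhR b| <= `|a - b|.
Proof.
wlog ab : a b / a <= b.
  move=> H; case: (leP a b) => [/H //|/ltW /H]; by rewrite distrC [`|a - b|]distrC.
have dv x : derivable (@tanhR R) x 1 by case: (tanh_der x).
rewrite distrC.
have [c _ ->] := @MVT_segment R (@tanhR R) (fun x => 1 - tanhR x ^+ 2) a b ab
  (fun x _ => tanh_der x) (derivable_within_continuous (fun x _ => dv x)).
rewrite normrM [`|a - b|]distrC ler_piMl //.
have /andP[t1 t2] := tanh_bnd c.
rewrite ger0_norm; nra.
Qed.
End Tanh.

Section RInt.
Local Open Scope classical_set_scope.
Variable R : realType.
Notation mu := (@lebesgue_measure R).

Lemma Rint_cells (I : finType) (D : set R) (mD : measurable D) (c : I -> R) (C : I -> set R) :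
 (forall i, 0 <= c i) -> (forall i, measurable (C i)) -> (forall i, (mu (C i `&` D) < +oo)%E) ->
 \int[mu]_(u in D) (\sum_i c i * \1_(C i) u) = \sum_i c i * fine (mu (C i `&` D)).
Proof.
move=> c0 mC fin.
rewrite /Rintegral.
under eq_integral do rewrite -sumEFin.
rewrite ge0_integral_sum //; last 2 first.
- move=> i; apply/measurable_EFinP; apply: measurable_funM; first exact: measurable_cst.
  apply: measurable_indic. exact: mC.
- by move=> i x _; rewrite lee_fin mulr_ge0 //.
have -> : (\sum_i \int[mu]_(x in D) (c i * \1_(C i) x)%:E =
           \sum_i (c i * fine (mu (C i `&` D)))%:E)%E.
  apply: eq_bigr => i _.
  under eq_integral do rewrite EFinM.
  rewrite ge0_integralZl_EFin //; last first.
    by apply/(measurable_EFinP _ (\1_(C i))); apply: measurable_indic.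
  rewrite integral_indic //; last exact: mC.
  have fi : mu (C i `&` D) \is a fin_num by rewrite ge0_fin_numE ?measure_ge0 ?fin.
  rewrite -[RHS]/((c i)%:E * (fine (mu (C i `&` D)))%:E)%E.
  by rewrite fineK.
by rewrite sumEFin.
Qed.
End RInt.

Section Cells.
Local Open Scope classical_set_scope.
Variable R : realType.
Notation mu := (@lebesgue_measure R).

Definition cell (r1 r2 : R) (b : bool * bool) : set R :=
  [set u | (0 <= u <= 1) && ((u <= r1) == b.1) && ((u <= r2) == b.2)].

Definition itvcell (r1 r2 : R) (b : bool * bool) : interval R :=
  match b with
  | (true, true) => `[0, Num.min r1 r2]%R
  | (true, false) => `]r2, r1]%R
  | (false, true) => `]r1, r2]%R
  | (false, false) => `]Num.max r1 r2, 1]%R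
  end.

Ltac bsolve := rewrite ?le_min ?gt_max; repeat match goal with
 | |- context[(?a <= ?b)%R] => case: (leP a b) => ?
 | |- context[(?a < ?b)%R] => case: (ltP a b) => ?
 end; try done; exfalso; lra.

Ltac mm := rewrite ?minElt ?maxElt; do 3 (try (case: ltP => ? /=)); try done; lra.

Lemma in_itvcell r1 r2 b u : 0 <= r1 <= 1 -> 0 <= r2 <= 1 ->
  (u \in itvcell r1 r2 b) = (0 <= u <= 1) && ((u <= r1) == b.1) && ((u <= r2) == b.2).
Proof.
move=> /andP[a1 b1] /andP[a2 b2].
by case: b => [[] []]; rewrite /= in_itv /=; bsolve.
Qed.

Lemma cellE r1 r2 b : 0 <= r1 <= 1 -> 0 <= r2 <= 1 ->
  cell r1 r2 b = [set` itvcell r1 r2 b].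
Proof.
move=> h1 h2; apply/seteqP; split => u /=; by rewrite /cell /= in_itvcell.
Qed.
Definition wt (r1 r2 : R) (b : bool * bool) : R := fine (mu (cell r1 r2 b)).

Lemma wtE r1 r2 b : 0 <= r1 <= 1 -> 0 <= r2 <= 1 ->
  wt r1 r2 b = match b with
   | (true, true) => Num.min r1 r2
   | (true, false) => Num.max (r1 - r2) 0
   | (false, true) => Num.max (r2 - r1) 0
   | (false, false) => 1 - Num.max r1 r2 end.
Proof.
move=> h1 h2; rewrite /wt cellE // lebesgue_measure_itv.
move: h1 h2 => /andP[a1 b1] /andP[a2 b2].
case: b => [[] []] /=; rewrite ?lte_fin ?minElt ?maxElt; case: (ltP r1 r2) => ? /=; do 2 (try (case: ltP => ? /=)); try done; lra.
Qed.
End Cells.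



Section Step.
Local Open Scope classical_set_scope.
Variables (R : realType) (m n : nat) (k : 'M[R]_m) (g : 'I_n -> 'I_m) (beta : R).
Notation mu := (@lebesgue_measure R).

Definition setv (s : config n) (v : 'I_n) (b : bool) : config n :=
  [ffun w => if w == v then b else s w].
Definition rr (s : config n) v := rplus beta (Sloc k g s v).
Definition Y (x : config n * config n) v (b : bool * bool) :=
  (setv x.1 v b.1, setv x.2 v b.2).
Definition W (x : config n * config n) v b := wt (rr x.1 v) (rr x.2 v) b.

Lemma rr_bnd s v : 0 <= rr s v <= 1.
Proof.
rewrite /rr /rplus; have /andP[h1 h2] := tanh_bnd (beta * Sloc k g s v).
apply/andP; split; lra.
Qed.

Lemma cell_sub (r1 r2 : R) b : cell r1 r2 b `<=` `[0%R, 1%R].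
Proof.
move=> u; rewrite /cell /= => /andP[/andP[/andP[u0 u1] _] _].
by rewrite in_itv /= u0 u1.
Qed.

Lemma step_int (h : config n * config n -> R) x v :
  (forall z, 0 <= h z) ->
  \int[mu]_(u in `[0%R, 1%R]) h (cstep k g beta x v u) =
  \sum_b W x v b * h (Y x v b).
Proof.
move=> h0.
have hr1 := rr_bnd x.1 v; have hr2 := rr_bnd x.2 v.
set r1 := rr x.1 v in hr1 *; set r2 := rr x.2 v in hr2 *.
have E : {in `[0%R, 1%R], (fun u => h (cstep k g beta x v u)) =1
   (fun u => \sum_b h (Y x v b) * \1_(cell r1 r2 b) u)}.
  move=> u /set_mem /=; rewrite in_itv /= => /andP[u0 u1].
  rewrite (_ : cstep k g beta x v u = Y x v (u <= r1, u <= r2)) //.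
  rewrite (bigD1 (u <= r1, u <= r2)) //= big1 ?addr0.
    rewrite indicE mem_set ?mulr1 //.
    by rewrite /cell /= u0 u1 !eqxx.
  move=> b hb; rewrite indicE memNset ?mulr0 //.
  rewrite /cell /= u0 u1 /= => /andP[/eqP e1 /eqP e2].
  by move: hb; case: b e1 e2 => b1 b2 /= <- <-; rewrite eqxx.
transitivity (\int[mu]_(u in `[0%R, 1%R]) (\sum_b h (Y x v b) * \1_(cell r1 r2 b) u)).
  exact: eq_Rintegral.
have sub b : cell r1 r2 b `<=` `[0%R, 1%R].
  move=> u /cell_sub; rewrite /= !in_itv /=; move=> /andP[? ?]; apply/andP; split; lra.
rewrite Rint_cells //.
- by apply: eq_bigr => b _; rewrite mulrC setIidl.
- by move=> b; rewrite cellE //; exact: measurable_itv.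
- move=> b; rewrite setIidl // cellE // lebesgue_measure_itv.
  by case: b => [[] []]; case: ifP => _ //=; rewrite -EFinB ltry.
Qed.

Lemma sum4 (F : bool * bool -> R) :
  \sum_b F b = F (true, true) + F (true, false) + F (false, true) + F (false, false).
Proof.
have -> : \sum_b F b = \sum_(p | xpredT p.1 && xpredT p.2) F (p.1, p.2).
  by apply: eq_bigr => [[]].
by rewrite -(pair_big xpredT xpredT (fun a b => F (a, b))) /= !big_bool /= !addrA.
Qed.

Lemma W_ge0 x v b : 0 <= W x v b.
Proof. by rewrite /W /wt fine_ge0 // measure_ge0. Qed.

Lemma W_sum x v : W x v (true,true) + W x v (true,false) + W x v (false,true) + W x v (false,false) = 1.
Proof.
have h1 := rr_bnd x.1 v; have h2 := rr_bnd x.2 v.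
rewrite /W !wtE //; move: h1 h2 => /andP[a1 b1] /andP[a2 b2].
rewrite ?minElt ?maxElt; case: ltP => ? /=; do 2 (try (case: ltP => ? /=)); try done; lra.
Qed.

Lemma W_diff x v : W x v (true,false) + W x v (false,true) = `|rr x.1 v - rr x.2 v|.
Proof.
have h1 := rr_bnd x.1 v; have h2 := rr_bnd x.2 v.
rewrite /W !wtE //; move: h1 h2 => /andP[a1 b1] /andP[a2 b2].
rewrite ?minElt ?maxElt; case: (ltP (rr x.1 v) (rr x.2 v)) => ? /=.
  rewrite ltr0_norm ?subr_lt0 //; do 2 (try (case: ltP => ? /=)); try done; lra.
rewrite ger0_norm ?subr_ge0 //; do 2 (try (case: ltP => ? /=)); try done; lra.
Qed.

Lemma cexp_ge0 f t x : (forall z, 0 <= f z) -> 0 <= cexp k g beta t f x.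
Proof.
move=> f0; elim: t x => [|t IH] x //=.
rewrite mulr_ge0 ?invr_ge0 ?ler0n // sumr_ge0 // => v _.
by apply: Rintegral_ge0 => u _; exact: IH.
Qed.

Lemma cexpS f t x : (forall z, 0 <= f z) ->
  cexp k g beta t.+1 f x =
  n%:R^-1 * \sum_v \sum_b W x v b * cexp k g beta t f (Y x v b).
Proof.
move=> f0 /=; congr (_ * _); apply: eq_bigr => v _.
by rewrite step_int // => z; exact: cexp_ge0.
Qed.
End Step.



Section OneStep.
Variables (R : realType) (m n : nat) (p : 'I_m -> R) (k : 'M[R]_m) (g : 'I_n -> 'I_m) (beta : R).

Lemma distbE j (x : config n * config n) :
  distb R g j x = \sum_u ((g u == j) && (x.1 u != x.2 u))%:R.
Proof.
rewrite /distb -sum1_card natr_sum big_mkcond /=.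
apply: eq_bigr => u _; first [rewrite finset.in_set | rewrite in_set | rewrite unfold_in /=].
by rewrite asboolb; case: ifP.
Qed.

Lemma dY j x v b :
  distb R g j (Y x v b) = distb R g j x - ((g v == j) && (x.1 v != x.2 v))%:R
     + ((g v == j) && (b.1 != b.2))%:R.
Proof.
rewrite !distbE (bigD1 v) //= [X in _ = X - _ + _](bigD1 v) //=.
rewrite /Y /setv /= !ffunE eqxx /=.
under eq_bigr => u uv do rewrite !ffunE (negbTE uv).
lra.
Qed.

Lemma sumb_d j x v :
  \sum_b W k g beta x v b * distb R g j (Y x v b) =
  distb R g j x - ((g v == j) && (x.1 v != x.2 v))%:R
    + (g v == j)%:R * `|rr k g beta x.1 v - rr k g beta x.2 v|.
Proof.
under eq_bigr do rewrite dY.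
rewrite sum4 /= !andbF !andbT -W_diff.
have hs := W_sum k g beta x v.
set w1 := W k g beta x v (true, true) in hs *.
set w2 := W k g beta x v (true, false) in hs *.
set w3 := W k g beta x v (false, true) in hs *.
set w4 := W k g beta x v (false, false) in hs *.
have -> : w4 = 1 - w1 - w2 - w3 by lra.
rewrite (_ : false%:R = 0 :> R) //.
move: (distb R g j x) (((g v == j) && (x.1 v != x.2 v))%:R) ((g v == j)%:R : R) => d a c.
ring.
Qed.

Lemma spin_diff a b : `|spin R a - spin R b| = 2 * (a != b)%:R.
Proof.
case: a; case: b => /=; rewrite /spin ?subrr ?normr0 ?mulr0 ?mulr1 //.
  by rewrite opprK ger0_norm.
by rewrite -opprD normrN ger0_norm.
Qed.

Lemma Sloc_diff s1 s2 v : (forall i j, 0 <= k i j) ->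
  `|Sloc k g s1 v - Sloc k g s2 v| <=
   2 * \sum_(w < n | w != v) Kvw k g v w * (s1 w != s2 w)%:R.
Proof.
move=> hk; rewrite /Sloc -sumrB mulr_sumr.
apply: le_trans (ler_norm_sum _ _ _) _.
apply: ler_sum => w _.
rewrite -mulrBr normrM spin_diff ger0_norm; last first.
  by rewrite /Kvw divr_ge0.
lra.
Qed.

Lemma rr_diff x v : (forall i j, 0 <= k i j) -> 0 <= beta ->
  `|rr k g beta x.1 v - rr k g beta x.2 v| <=
   beta * \sum_(w < n | w != v) Kvw k g v w * (x.1 w != x.2 w)%:R.
Proof.
move=> hk hb; rewrite /rr /rplus.
set S1 := Sloc k g x.1 v; set S2 := Sloc k g x.2 v.
have -> : (1 + tanhR (beta * S1)) / 2 - (1 + tanhR (beta * S2)) / 2 =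
          (tanhR (beta * S1) - tanhR (beta * S2)) / 2 by lra.
have h1 := tanh_lip (beta * S1) (beta * S2).
have h2 := Sloc_diff x.1 x.2 v hk.
rewrite -/S1 -/S2 -mulrBr normrM (ger0_norm hb) in h1.
rewrite normrM (ger0_norm (_ : 0 <= 2^-1)) //.
have h3 := ler_wpM2l hb h2.
set T := \sum_(w < n | w != v) _ in h2 h3 *.
nra.
Qed.

Lemma F3eq j (x : config n * config n) :
  \sum_v (g v == j)%:R * (beta * \sum_(w < n | w != v) Kvw k g v w * (x.1 w != x.2 w)%:R)
  = beta * \sum_w (x.1 w != x.2 w)%:R * (k j (g w) / n%:R) *
       (\sum_v (g v == j)%:R - (g w == j)%:R).
Proof.
have E1 : forall v, (g v == j)%:R * (beta * \sum_(w < n | w != v) Kvw k g v w * (x.1 w != x.2 w)%:R)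
   = \sum_w beta * ((x.1 w != x.2 w)%:R * (k j (g w) / n%:R) * ((g v == j)%:R * (w != v)%:R)).
  move=> v; rewrite big_mkcond /= !mulr_sumr; apply: eq_bigr => w _.
  rewrite /Kvw; case: (eqVneq (g v) j) => [<-|_]; case: (w != v) => /=;
    rewrite ?mul0r ?mulr0 ?mul1r ?mulr1 ?add0r //.
  by rewrite [_ * (x.1 w != _)%:R]mulrC.
rewrite (eq_bigr _ (fun v _ => E1 v)) exchange_big mulr_sumr; apply: eq_bigr => w _.
rewrite -mulr_sumr; congr (_ * _); rewrite -mulr_sumr; congr (_ * _).
rewrite [X in _ = X - _](bigD1 w) //= [LHS](bigD1 w) //= eqxx mulr0 add0r.
under eq_bigr => v vw do rewrite (eq_sym w v) vw mulr1.
by rewrite [(g w == j)%:R + _]addrC addrK.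
Qed.

Lemma perw j (x : config n * config n) w : n%:R != 0 :> R ->
  (x.1 w != x.2 w)%:R * Amat n p k beta j (g w) =
  n%:R^-1 * (n%:R * ((g w == j) && (x.1 w != x.2 w))%:R - ((g w == j) && (x.1 w != x.2 w))%:R
      + beta * ((x.1 w != x.2 w)%:R * (k j (g w) / n%:R) * (n%:R * p j - (g w == j)%:R))).
Proof.
move=> nn0.
  have t1 : true%:R = 1 :> R by [].
  have f0 : false%:R = 0 :> R by [].
  rewrite mxE.
  case: (x.1 w != x.2 w); case: (eqVneq (g w) j) => [->|hgw]; rewrite ?eqxx ?andbF ?andbT.
  all: rewrite ?t1 ?f0.
  all: move: (beta) (n%:R : R) nn0 (p j) => bb N hN pj.
  - by move: (k j j) => kk; field.
  - by move: (k j (g w)) => kk; field.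
  - by move: (k j j) => kk; field.
  - by move: (k j (g w)) => kk; field.
Qed.

Lemma one_step j (x : config n * config n) : (forall i j, 0 < k i j) -> 0 <= beta -> (0 < n)%N ->
  (forall i, \sum_v (g v == i)%:R = n%:R * p i) ->
  n%:R^-1 * \sum_v \sum_b W k g beta x v b * distb R g j (Y x v b)
   <= \sum_l Amat n p k beta j l * distb R g l x.
Proof.
move=> hk hb n0 hcnt.
have hk' : forall i j, 0 <= k i j by move=> *; exact: ltW.
have nn0 : n%:R != 0 :> R by rewrite pnatr_eq0 -lt0n.
under eq_bigr do rewrite sumb_d.
rewrite big_split /= sumrB sumr_const card_ord -distbE.
have HB : \sum_v (g v == j)%:R * `|rr k g beta x.1 v - rr k g beta x.2 v| <=
    beta * \sum_w (x.1 w != x.2 w)%:R * (k j (g w) / n%:R) * (n%:R * p j - (g w == j)%:R).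
  rewrite -hcnt -(F3eq j x).
  apply: ler_sum => v _; apply: ler_wpM2l; first by case: (g v == j).
  exact: rr_diff.
have RHS : \sum_l Amat n p k beta j l * distb R g l x =
  \sum_w n%:R^-1 * (n%:R * ((g w == j) && (x.1 w != x.2 w))%:R - ((g w == j) && (x.1 w != x.2 w))%:R
      + beta * ((x.1 w != x.2 w)%:R * (k j (g w) / n%:R) * (n%:R * p j - (g w == j)%:R))).
  transitivity (\sum_w (x.1 w != x.2 w)%:R * Amat n p k beta j (g w)).
    under eq_bigr do rewrite distbE mulr_sumr.
    rewrite exchange_big; apply: eq_bigr => w _.
    rewrite (bigD1 (g w)) // eqxx andTb big1; first by rewrite [LHS]/= addr0 mulrC.
    move=> l /andP[_ hl]; by rewrite eq_sym (negbTE hl) andFb mulr0.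
  by apply: eq_bigr => w _; apply: perw.
rewrite RHS -mulr_sumr; apply: ler_wpM2l; first by rewrite invr_ge0 ler0n.
rewrite big_split /= sumrB -!mulr_sumr -distbE -[distb R g j x *+ n]mulr_natr.
move: HB; lra.
Qed.

End OneStep.



Section Final.
Variables (R : realType) (m n : nat) (p : 'I_m -> R) (k : 'M[R]_m) (g : 'I_n -> 'I_m) (beta : R).

Lemma distb_ge0 j (x : config n * config n) : 0 <= distb R g j x.
Proof. by rewrite /distb ler0n. Qed.

Lemma mulcol (M : 'M[R]_m) (x : config n * config n) i :
  (M *m \col_(j < m) distb R g j x) i ord0 = \sum_j M i j * distb R g j x.
Proof. by rewrite mxE; apply: eq_bigr => j _; rewrite mxE. Qed.

Lemma Apow_ge0 t : (forall a b, 0 <= Amat n p k beta a b) ->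
  forall a b, 0 <= (Amat n p k beta ^+ t) a b.
Proof.
move=> hA; elim: t => [|t IH] a b.
  by rewrite expr0 /= mxE ler0n.
rewrite exprS -mulmxE mxE; apply: sumr_ge0 => c _; exact: mulr_ge0.
Qed.

Lemma main_ind (hA : forall a b, 0 <= Amat n p k beta a b) :
  (forall i j, 0 < k i j) -> 0 <= beta -> (0 < n)%N ->
  (forall i, \sum_v (g v == i)%:R = n%:R * p i) ->
  forall t x i, cexp k g beta t (distb R g i) x <=
    ((Amat n p k beta ^+ t) *m \col_(j < m) distb R g j x) i ord0.
Proof.
move=> hk hb n0 hcnt; elim=> [|t IH] x i.
  by rewrite expr0 mul1mx mxE.
set A := Amat n p k beta; set M := A ^+ t.
have hM := Apow_ge0 t hA.
apply: (@le_trans _ _ (n%:R^-1 * \sum_v \sum_b W k g beta x v b *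
          (\sum_j M i j * distb R g j (Y x v b)))).
  rewrite cexpS; last exact: distb_ge0.
  apply: ler_wpM2l; first by rewrite invr_ge0 ler0n.
  apply: ler_sum => v _; apply: ler_sum => b _; apply: ler_wpM2l; first exact: W_ge0.
  by rewrite -mulcol; exact: IH.
have -> : n%:R^-1 * \sum_v \sum_b W k g beta x v b * (\sum_j M i j * distb R g j (Y x v b))
   = \sum_j M i j * (n%:R^-1 * \sum_v \sum_b W k g beta x v b * distb R g j (Y x v b)).
  transitivity (n%:R^-1 * \sum_j \sum_v \sum_b M i j * (W k g beta x v b * distb R g j (Y x v b))).
    congr (_ * _).
    under eq_bigr => v _ do under eq_bigr => b _ do rewrite mulr_sumr.
    under eq_bigr => v _ do rewrite exchange_big.
    rewrite [LHS]exchange_big.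
    apply: eq_bigr => j _; apply: eq_bigr => v _; apply: eq_bigr => b _; exact: mulrCA.
  rewrite mulr_sumr; apply: eq_bigr => j _.
  rewrite mulrCA; congr (_ * _).
  by rewrite mulr_sumr; apply: eq_bigr => v _; rewrite mulr_sumr.
apply: (@le_trans _ _ (\sum_j M i j * \sum_l A j l * distb R g l x)).
  apply: ler_sum => j _; apply: ler_wpM2l; first exact: hM.
  exact: one_step.
rewrite exprSr -/M.
have -> : M * A = M *m A by rewrite mulmxE.
rewrite -mulmxA [X in _ <= X]mxE.
by apply: ler_sum => j _; rewrite mulcol.
Qed.
End Final.

Theorem lemma4p2 (R : realType) (m n : nat) (p : 'I_m -> R) (k : 'M[R]_m)
  (beta : R) (g : 'I_n -> 'I_m) :
  (0 < m)%N -> (0 < n)%N ->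
  (forall i, 0 < p i) -> \sum_(i < m) p i = 1 ->
  (forall i j, k i j = k j i) -> (forall i j, 0 < k i j) ->
  0 <= beta ->
  (forall i, (#|[set v : 'I_n | g v == i]|)%:R = n%:R * p i) ->
  forall (s0 s0' : config n) (t : nat) (i : 'I_m),
    cexp k g beta t (distb R g i) (s0, s0')
      <= ((Amat n p k beta ^+ t) *m \col_(j < m) distb R g j (s0, s0')) i ord0.
Proof.
move=> m0 n0 hp hsum hsym hk hb hcnt s0 s0' t i.
have nn0 : n%:R != 0 :> R by rewrite pnatr_eq0 -lt0n.
have hcnt' : forall i, \sum_v (g v == i)%:R = n%:R * p i.
  move=> a; rewrite -hcnt -sum1_card natr_sum [RHS]big_mkcond.
  by apply: eq_bigr => u _; rewrite inE; case: (g u == a).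
have np : 0 < n%:R :> R by rewrite ltr0n.
have hpn : forall a, n%:R^-1 <= p a.
  move=> a.
  have h1 : 1 <= n%:R * p a.
    have h0 : 0 < n%:R * p a by rewrite mulr_gt0.
    rewrite -hcnt in h0 *; rewrite ler1n; by rewrite ltr0n in h0.
  by rewrite -(ler_pM2l np) mulfV.
have hA : forall a b, 0 <= Amat n p k beta a b.
  move=> a b; rewrite mxE; case: eqP => [_|_].
    have h1 : n%:R^-1 <= 1 :> R by rewrite invf_le1 ?ler1n.
    have h2 : 0 <= beta * (k a a / n%:R) * (p a - n%:R^-1).
      rewrite mulr_ge0 ?subr_ge0 ?hpn // mulr_ge0 // divr_ge0 ?ler0n //; exact: ltW.
    lra.
  rewrite mulr_ge0 ?divr_ge0 ?ler0n //; [exact: mulr_ge0 (ltW (hp a))|exact: ltW].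
exact: main_ind.
Qed.
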